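(* There exist finite alphabets $Y,Z$, a constant $c>0$, and a sequence of consistent observation machines $\{N_n\}_n$ from $Y$ to $Z$ with $|N_n|\to\infty$ and $d(N_n)\le 2$ for all $n$, such that every Mealy machine implementing $N_n$ has at least $2^{c|N_n|}$ states.
   Context: An observation machine (OM) from $Y$ to $Z$ is a tuple $(Y,Z,S,D,\Delta,\lambda,r)$ with $S$ finite, $D\subseteq S\times Y$, $\Delta:D\to 2^S\setminus\{\emptyset\}$, $\lambda:D\to Z$, $r\in S$. A run on $y_0\dots y_n$ from $s_0$ is $s_0,y_0,z_0,s_1,\dots,s_{n+1}$ with $(s_i,y_i)\in D$, $s_{i+1}\in\Delta(s_i,y_i)$, $z_i=\lambda(s_i,y_i)$, with output $z_0\dots z_n$; $\Omega_N$ is the set of words having a run from $r$. $N$ is consistent if all runs from $r$ on each $\overline{y}\in\Omega_N$ have the same output $\lambda_N(\overline{y})$. A (completely specified) Mealy machine $T$ from $Y$ to $Z$ implements $N$ if $\lambda_T(\overline{y})=\lambda_N(\overline{y})$ for all $\overline{y}\in\Omega_N$. The size is $|N|=|S|+\sum_{(s,y)\in D}|\Delta(s,y)|$ and the degree is $d(N)=\max_{(s,y)\in D}|\Delta(s,y)|$. *)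

(* Defs.v *)
From Stdlib Require Import Reals.
From mathcomp Require Import all_boot.

Set Implicit Arguments.
Unset Strict Implicit.
Unset Printing Implicit Defensive.

(* The domain D is the
   boolean predicate om_dom; Delta and lambda are total functions whose values
   are only meaningful on D (well-formedness: Delta is nonempty on D). *)
Record OM (Y Z : finType) := {
  om_state : finType;
  om_dom : om_state -> Y -> bool;
  om_delta : om_state -> Y -> {set om_state};
  om_out : om_state -> Y -> Z;
  om_root : om_state
}.
Arguments om_state {Y Z} _.
Arguments om_dom {Y Z} _ _ _.
Arguments om_delta {Y Z} _ _ _.
Arguments om_out {Y Z} _ _ _.
Arguments om_root {Y Z} _.

Definition om_wf (Y Z : finType) (N : OM Y Z) : Prop :=
  forall s y, om_dom N s y -> om_delta N s y != set0.

Unset Implicit Arguments.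
Inductive om_run (Y Z : finType) (N : OM Y Z) : om_state N -> seq Y -> seq Z -> Prop :=
| om_run_nil s : om_run Y Z N s [::] [::]
| om_run_cons s y s' w zs :
    om_dom N s y -> s' \in om_delta N s y -> om_run Y Z N s' w zs ->
    om_run Y Z N s (y :: w) (om_out N s y :: zs).
Set Implicit Arguments.
Arguments om_run {Y Z} N _ _ _.

Definition om_accepts (Y Z : finType) (N : OM Y Z) (w : seq Y) : Prop :=
  w <> [::] /\ exists zs, om_run N (om_root N) w zs.

Definition om_consistent (Y Z : finType) (N : OM Y Z) : Prop :=
  forall w zs1 zs2, w <> [::] ->
    om_run N (om_root N) w zs1 -> om_run N (om_root N) w zs2 -> zs1 = zs2.

Definition om_size (Y Z : finType) (N : OM Y Z) : nat :=
  #|om_state N| + \sum_(s : om_state N) \sum_(y : Y | om_dom N s y) #|om_delta N s y|.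

Definition om_degree (Y Z : finType) (N : OM Y Z) : nat :=
  \max_(s : om_state N) \max_(y : Y | om_dom N s y) #|om_delta N s y|.

Record Mealy (Y Z : finType) := {
  me_state : finType;
  me_delta : me_state -> Y -> me_state;
  me_out : me_state -> Y -> Z;
  me_init : me_state
}.
Arguments me_state {Y Z} _.
Arguments me_delta {Y Z} _ _ _.
Arguments me_out {Y Z} _ _ _.
Arguments me_init {Y Z} _.

Unset Implicit Arguments.
Fixpoint me_run (Y Z : finType) (T : Mealy Y Z) (q : me_state T) (w : seq Y) : seq Z :=
  if w is y :: w' then me_out T q y :: me_run Y Z T (me_delta T q y) w' else [::].
Set Implicit Arguments.
Arguments me_run {Y Z} T _ _.

Definition me_lambda (Y Z : finType) (T : Mealy Y Z) (w : seq Y) : seq Z :=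
  me_run T (me_init T) w.

Definition implements (Y Z : finType) (T : Mealy Y Z) (N : OM Y Z) : Prop :=
  forall w zs, w <> [::] -> om_run N (om_root N) w zs -> me_lambda T w = zs.

(* Main.v *)
Require Import Defs.
From Stdlib Require Import Reals Lra.
From mathcomp Require Import all_boot.
From mathcomp Require Import zify.

Set Implicit Arguments.
Unset Strict Implicit.
Unset Printing Implicit Defensive.

Section M.
Variable n : nat.
Definition St : finType := option (option (bool * 'I_n.+1)).
Definition rS : St := Some None.
Definition dS : St := None.
Definition cS x i : St := Some (Some (x, i)).

Definition dom (s : St) (y : option bool) : bool :=
  match s, y with
  | Some None, Some _ => true
  | Some (Some (_, i)), Some _ => i < n
  | Some (Some (_, i)), None => val i == n
  | _, _ => false
  end.

Definition delta (s : St) (y : option bool) : {set St} :=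
  match s, y with
  | Some None, Some x => [set rS; cS x ord0]
  | Some (Some (x, i)), Some _ => [set cS x (inord i.+1)]
  | Some (Some _), None => [set dS]
  | _, _ => set0
  end.

Definition out (s : St) (y : option bool) : bool :=
  match s, y with
  | Some (Some (x, _)), None => x
  | _, _ => false
  end.

Definition NN : OM (option bool : finType) (bool : finType) :=
  {| om_state := St; om_dom := dom; om_delta := delta; om_out := out; om_root := rS |}.
End M.
Section L.
Variable n : nat.

Lemma NN_wf : om_wf (NN n).
Proof.
move=> [[[x i]|]|] [y|] //= _; apply/set0Pn.
- by exists (cS x (inord i.+1)); rewrite in_set1.
- by exists (dS n); rewrite in_set1.
- by exists (rS n); rewrite !inE eqxx.
Qed.

Lemma NN_deg2 s y : dom s y -> #|@delta n s y| <= 2.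
Proof.
case: s y => [[[x i]|]|] [y|] //= _; rewrite ?cards1 ?cards2 //; by case: (_ != _).
Qed.

Lemma NN_degree : om_degree (NN n) <= 2.
Proof.
apply/bigmax_leqP => s _; apply/bigmax_leqP => y Hy; exact: NN_deg2.
Qed.

Lemma card_St : #|St n| = (n.+1).*2.+2.
Proof.
by rewrite /St !card_option card_prod card_bool card_ord mul2n.
Qed.

Lemma NN_size_ub : om_size (NN n) <= 7 * #|St n|.
Proof.
rewrite /om_size /=.
have H : \sum_(s : St n) \sum_(y : option bool | dom s y) #|delta s y| <= \sum_(s : St n) 6.
  apply: leq_sum => s _.
  apply: (@leq_trans (\sum_(y : option bool) 2)).
    rewrite [X in _ <= X](bigID (fun y => dom s y)) /=.
    apply: leq_trans (leq_addr _ _).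
    by apply: leq_sum => y Hy; exact: NN_deg2.
  by rewrite sum_nat_const card_option card_bool.
rewrite sum_nat_const cardT /= in H.
rewrite cardT /=. move: H; set a := size _; set b := \sum_(i <- _) _; lia.
Qed.

Lemma NN_size_lb : #|St n| <= om_size (NN n).
Proof. by rewrite /om_size leq_addr. Qed.

Definition ph (s : St n) : option nat :=
  match s with Some (Some (_, i)) => Some (val i) | _ => None end.

Definition PP (s1 s2 : St n) : bool := (s1 == s2) || (ph s1 != ph s2).

Lemma step s1 s2 y t1 t2 : PP s1 s2 -> dom s1 y -> dom s2 y ->
  t1 \in delta s1 y -> t2 \in delta s2 y -> out s1 y = out s2 y /\ PP t1 t2.
Proof.
case: s1 => [[[x1 i1]|]|]; case: s2 => [[[x2 i2]|]|]; case: y => [y|] //=;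
  rewrite /PP /= ?inE ?eqxx //=.
- move=> H h1 h2 /eqP -> /eqP ->; split => //.
  rewrite /= !inordK ?ltnS //.
  case/orP: H => [/eqP [-> ->]|H]; first by rewrite eqxx.
  apply/orP; right; apply: contra H => /eqP [E]; apply/eqP; congr Some; exact: E.
- move=> H /eqP h1 /eqP h2 /eqP -> /eqP ->; split; last by rewrite eqxx.
  case/orP: H => [/eqP [->]|H] //.
  exfalso; move/eqP: H; apply; by rewrite h1 h2.
- move=> _ h1 _ /eqP -> /orP [] /eqP -> ; split => //; apply/orP; right; by rewrite /= ?inordK.
- move=> _ _ h2 /orP [] /eqP -> /eqP -> ; split => //; apply/orP; right; by rewrite /= ?inordK.
- move=> _ _ _ /orP [] /eqP -> /orP [] /eqP -> ; split => //=; by rewrite ?eqxx ?orbT.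
Qed.

Lemma runs_agree s1 w zs1 : om_run (NN n) s1 w zs1 ->
  forall s2 zs2, PP s1 s2 -> om_run (NN n) s2 w zs2 -> zs1 = zs2.
Proof.
elim=> [s|s y s' w' zs Hd Hin Hr IH] s2 zs2 HP H2; inversion H2 as [|a b t2 c zs2' Hd2 Hin2 Hr2]; subst => //.
have [Eo HP'] := step HP Hd Hd2 Hin Hin2.
simpl in Eo |- *; rewrite Eo; congr cons; exact: IH HP' Hr2.
Qed.

Lemma NN_consistent : om_consistent (NN n).
Proof.
move=> w zs1 zs2 _ H1 H2; apply: runs_agree H1 _ _ _ H2; by rewrite /PP eqxx.
Qed.
End L.
Section LB.
Variable n : nat.

Inductive runE : St n -> seq (option bool) -> seq bool -> St n -> Prop :=
| runE_nil s : runE s [::] [::] s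
| runE_cons s y t w zs u : dom s y -> t \in delta s y -> runE t w zs u ->
    runE s (y :: w) (out s y :: zs) u.

Lemma runE_cat s w1 zs1 t w2 zs2 u : runE s w1 zs1 t -> runE t w2 zs2 u ->
  runE s (w1 ++ w2) (zs1 ++ zs2) u.
Proof.
elim=> [//|s' y t' w zs u' Hd Hin Hr IH] H2 /=.
exact: runE_cons Hd Hin (IH H2).
Qed.

Lemma runE_run s w zs t : runE s w zs t -> om_run (NN n) s w zs.
Proof.
elim=> [s'|s' y t' w' zs' u' Hd Hin Hr IH]; first exact: om_run_nil.
exact: (@om_run_cons _ _ (NN n) s' y t' w' zs').
Qed.

Lemma runE_root p : runE (rS n) (map Some p) (nseq (size p) false) (rS n).
Proof.
elim: p => [|x p IH] /=; first exact: runE_nil.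
apply: runE_cons IH => //; by rewrite !inE eqxx.
Qed.

Lemma runE_chain x p j : j + size p <= n ->
  runE (cS x (inord j)) (map Some p) (nseq (size p) false) (cS x (inord (j + size p))).
Proof.
elim: p j => [|y p IH] j Hj /=; first by rewrite addn0; exact: runE_nil.
have Hj' : j < n by move: Hj; rewrite addnS; apply: leq_trans; rewrite ltnS leq_addr.
have Hj1 : j < n.+1 by apply: ltnW.
apply: (@runE_cons _ _ (cS x (inord j.+1))).
- by rewrite /= inordK.
- by rewrite /= inordK // inE.
- rewrite addnS -addSn; apply: IH; by rewrite addSn -addnS.
Qed.

Lemma full_run (t : seq bool) (i : nat) : size t = n.+1 -> i < n.+1 ->
  exists zs, runE (rS n) (map Some t ++ nseq i (Some false) ++ [:: None])
                     (rcons zs (nth false t i)) (dS n).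
Proof.
move=> Hs Hi.
set x := nth false t i.
set p := drop i.+1 t ++ nseq i false.
have Hp : size p = n by rewrite /p size_cat size_drop size_nseq Hs; lia.
have Et : t = take i t ++ x :: drop i.+1 t by rewrite -drop_nth ?Hs // cat_take_drop.
have Ew : map Some t ++ nseq i (Some false) ++ [:: None] =
   map Some (take i t) ++ ([:: Some x] ++ (map Some p ++ [:: None])).
  by rewrite {1}Et /p !map_cat map_nseq /= -!catA.
rewrite Ew.
exists (nseq (size (take i t)) false ++ false :: nseq (size p) false).
rewrite -cats1 -!catA /=.
apply: runE_cat (runE_root _) _.
have i0 : (inord 0 : 'I_n.+1) = ord0 by apply: val_inj; rewrite /= inordK.
apply: (@runE_cat _ [:: Some x] [:: false] (cS x (inord 0))).
  apply: runE_cons (runE_nil _) => //=; by rewrite i0 !inE eqxx orbT.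
have Hc := @runE_chain x p 0; rewrite add0n Hp in Hc.
rewrite Hp; apply: (runE_cat (Hc (leqnn n))).
apply: (@runE_cons _ _ (dS n)); rewrite /= ?inordK ?Hp ?inE //.
exact: runE_nil.
Qed.
End LB.
Lemma me_run_cat (T : Mealy (option bool) bool) q w1 w2 :
  me_run T q (w1 ++ w2) = me_run T q w1 ++ me_run T (foldl (me_delta T) q w1) w2.
Proof. by elim: w1 q => [|y w IH] q //=; rewrite IH. Qed.

Lemma lb n (T : Mealy (option bool) bool) : implements T (NN n) -> 2 ^ n.+1 <= #|me_state T|.
Proof.
move=> HT.
pose f (t : (n.+1).-tuple bool) := foldl (me_delta T) (me_init T) (map Some t).
have key (t0 : (n.+1).-tuple bool) (i : 'I_n.+1) :
    me_out T (foldl (me_delta T) (f t0) (nseq i (Some false))) None = tnth t0 i.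
  have [zs Hr] := full_run (size_tuple t0) (ltn_ord i).
  have Hne : map Some t0 ++ nseq i (Some false) ++ [:: None] <> [::].
    by rewrite catA => /(f_equal size); rewrite size_cat addn1.
  have := HT _ _ Hne (runE_run Hr).
  rewrite /me_lambda !me_run_cat /= => /(congr1 (last false)).
  by rewrite !last_cat /= last_rcons (tnth_nth false).
have inj : injective f.
  move=> t t' E; apply/eqP; apply/negPn/negP => Hne.
  have [i Hi] : exists i : 'I_n.+1, tnth t i != tnth t' i.
    apply/existsP; apply: contraR Hne => /existsPn H; apply/eqP/eq_from_tnth => i.
    by move: (H i); move/negPn/eqP.
  by move: Hi; rewrite -key -key E eqxx.
have := leq_card f inj.
by rewrite card_tuple card_bool.
Qed.

Section RR.
Local Open Scope R_scope.
Lemma INR_exp2 k : INR (expn 2 k) = pow 2 k.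
Proof.
elim: k => [|k IH] //=; rewrite expnS mult_INR IH //.
Qed.
Lemma INR28 : INR 28 = 28.
Proof. rewrite /=; lra. Qed.
End RR.

Theorem lemma2 :
  exists (Y Z : finType) (c : R), Rlt 0 c /\
  exists N : nat -> OM Y Z,
    (forall n, om_wf (N n) /\ om_consistent (N n)) /\
    (forall M : nat, exists n0 : nat, forall n, n0 <= n -> M <= om_size (N n)) /\
    (forall n, om_degree (N n) <= 2) /\
    (forall n (T : Mealy Y Z), implements T (N n) ->
       Rle (Rpower 2 (Rmult c (INR (om_size (N n))))) (INR #|me_state T|)).
Proof.
exists (option bool : finType), (bool : finType), (Rinv (INR 28)); split.
  by apply: Rinv_0_lt_compat; rewrite INR28; lra.
exists NN; split; first by move=> n; split; [exact: NN_wf | exact: NN_consistent].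
split.
  move=> M; exists M => n Hn; apply: leq_trans (NN_size_lb n).
  rewrite card_St; lia.
split; first exact: NN_degree.
move=> n T HT.
have h1 := lb HT.
have h2 : om_size (NN n) <= 28 * n.+1.
  apply: leq_trans (NN_size_ub n) _; rewrite card_St; lia.
apply: (@Rle_trans _ (Rpower 2 (INR n.+1))).
  apply: Rle_Rpower; first lra.
  have h3 : Rle (INR (om_size (NN n))) (INR (28 * n.+1)) by apply: le_INR; apply/leP.
  rewrite mult_INR in h3.
  rewrite INR28 in h3; rewrite INR28; lra.
rewrite Rpower_pow; last lra.
rewrite -INR_exp2; apply: le_INR; exact/leP.
Qed.
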